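(* Let $\Sigma$ be a finite alphabet with $m=|\Sigma|$, and let $M=(Q,\Sigma,\delta,\vec q_0,F)$ be the deterministic finite automaton defined as follows. Fix a symbol $a_0\notin\Sigma$. The state set is $Q=P\times N\times C$ where $P=\Sigma\cup\{a_0\}$ (component $p$, the last input letter), $N=(\Sigma\cup\{\epsilon\})^{m+1}$ (component $\vec n=(n_d)_{d\in\Sigma\cup\{a_0\}}$, recording for each $d$ the letter most recently read right after $d$), and $C=\{\mathtt{WHITE},\mathtt{BLACK}\}^m$ (component $\vec c=(c_d)_{d\in\Sigma}$). The initial state is $\vec q_0=(a_0,\epsilon^{m+1},\mathtt{WHITE}^m)$ and the final states are $F=\{(p,\vec n,\vec c)\in Q:\vec c\neq\mathtt{BLACK}^m\}$. The transition $\delta((p,\vec n,\vec c),a)$ for $a\in\Sigma$ is computed by the following procedure: (1) if $n_p\neq\epsilon$ and $n_p\neq a$, then set $b\gets p$ and repeat \{$c_b\gets\mathtt{BLACK}$; $b\gets n_b$\} until $b=p$; (2) then, if $c_a=\mathtt{BLACK}$, set $\vec c\gets\mathtt{BLACK}^m$; (3) set $n_p\gets a$; (4) set $p\gets a$; the resulting $(p,\vec n,\vec c)$ is the new state. Then the language accepted by $M$ equals $L$, the language of unique Eulerian trails over $\Sigma$.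
   Context: For a word $t=t_1\cdots t_n$ over $\Sigma$ (viewed as a vertex set), $G(t)$ is the directed multigraph on $\Sigma$ with one edge $t_i\to t_{i+1}$ for each $1\le i<n$; a word $s=s_1\cdots s_k$ is an Eulerian trail of $G(t)$ if the multiset of pairs $\{(s_i,s_{i+1}):1\le i<k\}$ equals the multiset $\{(t_i,t_{i+1}):1\le i<n\}$ (trails are vertex sequences). The language $L\subseteq\Sigma^*$ consists of the empty word $\epsilon$ together with all nonempty words $t$ such that $t$ is the only Eulerian trail of $G(t)$ starting at the vertex $t_1$ (no word $s\neq t$ with $s_1=t_1$ is an Eulerian trail of $G(t)$). *)

(* Defs.v *)
From mathcomp Require Import all_boot.
Set Implicit Arguments. Unset Strict Implicit. Unset Printing Implicit Defensive.

Section Euler.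
Variable S : finType.

(* Multiset (as a list) of the edges t_i -> t_{i+1} of G(t). *)
Definition edges (t : seq S) : seq (S * S) := zip t (behead t).

(* t is in L: t = epsilon, or t is the only Eulerian trail of G(t) starting at t_1.
   An Eulerian trail s of G(t) with s_1 = t_1 is a word x :: s' whose edge multiset
   equals that of t. *)
Definition inL (t : seq S) : Prop :=
  match t with
  | [::] => True
  | x :: _ => forall s' : seq S, perm_eq (edges (x :: s')) (edges t) -> x :: s' = t
  end.

(* P = Sigma + {a0}        : option S, None = a0
   N = (Sigma + {eps})^(Sigma + {a0}) : {ffun option S -> option S}, value None = eps
   C = {WHITE,BLACK}^Sigma : {ffun S -> bool}, true = BLACK *)
Definition Pst := option S.
Definition Nst := {ffun option S -> option S}.
Definition Cst := {ffun S -> bool}.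
Definition state := (Pst * Nst * Cst)%type.

Definition blacken1 (c : Cst) (b : Pst) : Cst :=
  match b with
  | Some d => [ffun e => (e == d) || c e]
  | None => c  (* c has no a0 component; never happens on reachable states *)
  end.

(* Step (1): b <- p; repeat { c_b <- BLACK; b <- n_b } until b = p.
   Executed with fuel (#|S|.+1 iterations, which suffices whenever the loop
   terminates, since P has #|S|.+1 elements); it also stops if b becomes eps. *)
Fixpoint blacken_loop (fuel : nat) (p : Pst) (n : Nst) (b : Pst) (c : Cst) : Cst :=
  match fuel with
  | 0 => c
  | k.+1 =>
    let c' := blacken1 c b in
    match n b with
    | None => c'
    | Some d => if Some d == p then c' else blacken_loop k p n (Some d) c'
    end
  end.

Definition delta (q : state) (a : S) : state :=
  let: (p, n, c) := q in
  let c1 := if (n p != None) && (n p != Some a)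
            then blacken_loop #|S|.+1 p n p c else c in
  let c2 := if c1 a then [ffun => true] else c1 in
  let n' := [ffun d => if d == p then Some a else n d] in
  (Some a, n', c2).

Definition q0 : state := (None, [ffun => None], [ffun => false]).

Definition final (q : state) : bool := let: (_, _, c) := q in [exists d, ~~ c d].

Definition accepts (w : seq S) : bool := final (foldl delta q0 w).

End Euler.

(* Main.v *)
Require Import Defs.
From mathcomp Require Import all_boot zify.
From Stdlib Require Import Classical.
Set Implicit Arguments. Unset Strict Implicit. Unset Printing Implicit Defensive.

Definition pat {S : finType} (x0 : S) (t : seq S) : Prop :=
  exists i j k l, [/\ i < j, j <= k, k < l, l < size t &
    [/\ nth x0 t i = nth x0 t k, nth x0 t j = nth x0 t l & nth x0 t i.+1 <> nth x0 t k.+1]].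

Lemma edges_cons2 {S : finType} (x y : S) s : edges (x :: y :: s) = (x,y) :: edges (y :: s).
Proof. by []. Qed.

Lemma size_edges {S : finType} (s : seq S) : size (edges s) = (size s).-1.
Proof. rewrite /edges size_zip size_behead; case: s => //= ? s; lia. Qed.

Lemma mem_edges {S : finType} (x0 u v : S) s : (u,v) \in edges s ->
  exists k, k.+1 < size s /\ nth x0 s k = u /\ nth x0 s k.+1 = v.
Proof.
elim: s => [|x s IH] //. case: s IH => [|y s] IH //.
rewrite edges_cons2 in_cons => /orP [/eqP [-> ->]| /IH [k [h1 [h2 h3]]]].
  by exists 0.
by exists k.+1.
Qed.

Lemma edges_mem {S : finType} (x0 : S) s k : k.+1 < size s ->
  (nth x0 s k, nth x0 s k.+1) \in edges s.
Proof.
elim: s k => [|x s IH] k //. case: s IH => [|y s] IH //.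
rewrite edges_cons2 in_cons; case: k => [|k] hk; first by rewrite eqxx.
by rewrite IH ?orbT.
Qed.

Lemma edges_fst {S : finType} (u v : S) s : (u,v) \in edges s -> u \in s.
Proof.
move=> h; have [k [hk [<- _]]] := mem_edges u h.
by apply: mem_nth; apply: ltnW.
Qed.

Lemma edges_cat_cons {S : finType} (u : seq S) y v :
  edges (u ++ y :: v) = edges (rcons u y) ++ edges (y :: v).
Proof.
elim: u => [|x u IH] //. case: u IH => [|z u] IH //.
by rewrite cat_cons [_ :: (_ :: _) ++ _]/= edges_cons2 -cat_cons IH !rcons_cons edges_cons2.
Qed.

Lemma edges_cat {S : finType} (x : S) u v :
  edges (x :: u ++ v) = edges (x :: u) ++ edges (last x u :: v).
Proof.
elim: u x => [|y u IH] x //. by rewrite cat_cons edges_cons2 IH edges_cons2.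
Qed.

Lemma pat_shift {S : finType} (x0 : S) v w : pat x0 w -> pat x0 (v ++ w).
Proof.
move=> [i [j [k [l [h1 h2 h3 h4 [h5 h6 h7]]]]]].
exists (size v + i), (size v + j), (size v + k), (size v + l).
rewrite -!addnS !nth_cat size_cat !ltnNge !leq_addr /= !addKn; split => //; lia.
Qed.

Lemma key {S : finType} (x0 p a b : S) T' S'' : a != b ->
  perm_eq (edges (p :: b :: S'')) (edges (p :: a :: T')) ->
  ~ pat x0 (p :: a :: T') -> False.
Proof.
set Tt := p :: a :: T' => ab hperm hnp.
have /(mem_edges x0) [k [hk [hTk hTk1]]] : (p,b) \in edges Tt.
  by rewrite -(perm_mem hperm) edges_cons2 mem_head.
have k0 : 0 < k.
  case: k hk hTk hTk1 => // _ _ /= h; by rewrite h eqxx in ab.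
have hb : forall j l, 0 < j <= k -> k < l < size Tt -> nth x0 Tt j <> nth x0 Tt l.
  move=> j l /andP [j1 j2] /andP [l1 l2] e; apply: hnp.
  exists 0, j, k, l; split => //; split => //.
  by rewrite hTk1 /= => e2; rewrite e2 eqxx in ab.
pose V2 z := exists l, k < l < size Tt /\ nth x0 Tt l = z.
have Vp : ~ V2 p.
  move=> [l [hl el]]; apply: (hb k l) => //; first by rewrite k0 leqnn.
  by rewrite hTk el.
have Vc : forall u v, (u,v) \in edges Tt -> V2 u -> V2 v.
  move=> u v /(mem_edges x0) [m [hm [<- <-]]] [l [hl el]].
  case: (ltnP k m) => km.
    by exists m.+1; split => //; apply/andP; split => //; apply: (leq_trans km).
  case: m hm km el => [|m] hm km el.
    by case: Vp; exists l; split.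
  by case: (hb m.+1 l) => //; apply/andP.
have Vall : forall r z, V2 z -> {subset edges (z :: r) <= edges Tt} ->
    forall w, w \in z :: r -> V2 w.
  elim=> [|y r IH] z hz hsub w.
    by rewrite mem_seq1 => /eqP ->.
  rewrite in_cons => /orP [/eqP -> //|].
  apply: IH.
    by apply: (Vc z); first by apply: hsub; rewrite edges_cons2 mem_head.
  by move=> e he; apply: hsub; rewrite edges_cons2 in_cons he orbT.
have Vb : V2 b by exists k.+1; split => //; apply/andP; split.
have : (p,a) \in edges (p :: b :: S'') by rewrite (perm_mem hperm) edges_cons2 mem_head.
rewrite edges_cons2 in_cons => /orP [/eqP [e]|]; first by rewrite e eqxx in ab.
move/edges_fst => hp; apply: Vp; apply: (Vall S'' b) => //.
by move=> e he; rewrite -(perm_mem hperm) edges_cons2 in_cons he orbT.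
Qed.

Lemma uniq_trail {S : finType} (x0 x : S) t2 u0 s2 :
  ~ pat x0 (x :: u0 ++ t2) ->
  perm_eq (edges (x :: u0 ++ s2)) (edges (x :: u0 ++ t2)) -> s2 = t2.
Proof.
elim: t2 u0 s2 => [|a t2 IH] u0 s2 hnp hperm.
  have := perm_size hperm; rewrite !size_edges /= !size_cat /=.
  by case: s2 {hperm} => // ? ? /= h; exfalso; lia.
case: s2 hperm => [|b s2] hperm.
  have := perm_size hperm; rewrite !size_edges /= !size_cat /= => h; exfalso; lia.
case: (eqVneq a b) => [e|ab].
  subst b; congr (_ :: _); apply: (IH (rcons u0 a)); by rewrite !cat_rcons.
exfalso.
rewrite !edges_cat in hperm; move: hperm; rewrite perm_cat2l => hperm.
apply: (key (x0 := x0) (p := last x u0) (a := a) (b := b) (T' := t2) (S'' := s2) ab hperm) => hp; apply: hnp.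
have -> : x :: u0 ++ a :: t2 = belast x u0 ++ (last x u0 :: a :: t2).
  by rewrite -cat_cons (lastI x u0) cat_rcons.
exact: pat_shift.
Qed.

Lemma nopat_inL {S : finType} (x0 : S) t : ~ pat x0 t -> inL t.
Proof.
case: t => [|x t] //= hnp s' hperm.
by rewrite (@uniq_trail _ x0 x t [::] s').
Qed.

Lemma split_drop {S : Type} (t : seq S) m n : m <= n ->
  drop m t = take (n - m) (drop m t) ++ drop n t.
Proof. move=> h; by rewrite -{1}(cat_take_drop (n - m) (drop m t)) drop_drop subnK. Qed.

Lemma decomp {S : finType} (x0 : S) t i j k l :
  i < j -> j <= k -> k < l -> l < size t ->
  nth x0 t i = nth x0 t k -> nth x0 t j = nth x0 t l ->
  exists A P' Q R' B',
    [/\ t = A ++ nth x0 t i :: P' ++ Q ++ nth x0 t i :: R' ++ nth x0 t j :: B',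
        size A = i, size (A ++ nth x0 t i :: P' ++ Q) = k &
        (Q = [::] /\ nth x0 t i = nth x0 t j) \/ (exists Q', Q = nth x0 t j :: Q')].
Proof.
move=> ij jk kl ls eik ejl.
exists (take i t), (take (j - i.+1) (drop i.+1 t)), (take (k - j) (drop j t)),
  (take (l - k.+1) (drop k.+1 t)), (drop l.+1 t).
set X := nth x0 t i; set Y := nth x0 t j.
have e1 : drop i t = X :: drop i.+1 t by apply: drop_nth; lia.
have e2 := split_drop t ij.
have e3 := split_drop t jk.
have e4 : drop k t = X :: drop k.+1 t by rewrite /X eik; apply: drop_nth; lia.
have e5 := split_drop t kl.
have e6 : drop l t = Y :: drop l.+1 t by rewrite /Y ejl; apply: drop_nth; lia.
split.
- by rewrite -e6 -e5 -e4 -e3 -e2 -e1 cat_take_drop.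
- by rewrite size_takel //; lia.
- rewrite size_cat /= size_cat !size_takel ?size_drop; lia.
- case: (ltnP j k) => h.
    right; rewrite (drop_nth x0); last by lia.
    have -> : k - j = (k - j).-1.+1 by lia.
    by eexists.
  left; have -> : k - j = 0 by lia.
  have ekj : k = j by lia.
  by split; [rewrite take0 | rewrite /X /Y eik ekj].
Qed.

Lemma swap_perm {S : finType} (A P' Q R' B' : seq S) (X Y : S) :
  (Q = [::] /\ X = Y) \/ (exists Q', Q = Y :: Q') ->
  perm_eq (edges (A ++ X :: R' ++ Q ++ X :: P' ++ Y :: B'))
          (edges (A ++ X :: P' ++ Q ++ X :: R' ++ Y :: B')).
Proof.
case=> [[-> <-]|[Q' ->]] /=.
  rewrite (edges_cat_cons A) (edges_cat_cons A) (edges_cat_cons (X :: R'))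
    (edges_cat_cons (X :: P')) (edges_cat_cons (X :: P')) (edges_cat_cons (X :: R')).
  by apply/permP => f; rewrite !count_cat; lia.
rewrite (edges_cat_cons A) (edges_cat_cons A) (edges_cat_cons (X :: R'))
  (edges_cat_cons (X :: P')) (edges_cat_cons (Y :: Q')) (edges_cat_cons (Y :: Q'))
  (edges_cat_cons (X :: P')) (edges_cat_cons (X :: R')).
by apply/permP => f; rewrite !count_cat; lia.
Qed.

Lemma inL_head {S : finType} (x0 : S) t s : t != [::] -> inL t -> s != [::] ->
  head x0 s = head x0 t -> perm_eq (edges s) (edges t) -> s = t.
Proof.
case: t => [|x t] // _; case: s => [|y s] // /= h _ e; subst y; exact: h.
Qed.

Lemma pat_notinL {S : finType} (x0 : S) t : pat x0 t -> ~ inL t.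
Proof.
move=> [i [j [k [l [ij jk kl ls [eik ejl nik]]]]]] hL.
have [A [P' [Q [R' [B' [ht hA hk hQ]]]]]] := decomp ij jk kl ls eik ejl.
move: nik ht hk hQ; set X := nth x0 t i; set Y := nth x0 t j => nik ht hk hQ.
have hi1 : nth x0 t i.+1 = nth x0 (P' ++ Q ++ X :: R' ++ Y :: B') 0.
  by rewrite {1}ht nth_cat hA ltnNge leqnSn /= subSnn.
have hk1 : nth x0 t k.+1 = nth x0 (R' ++ Y :: B') 0.
  have ht' : t = (A ++ X :: P' ++ Q) ++ X :: R' ++ Y :: B'.
    by rewrite {1}ht -!catA /= -!catA.
  by rewrite {1}ht' nth_cat hk ltnNge leqnSn /= subSnn.
set s := A ++ X :: R' ++ Q ++ X :: P' ++ Y :: B'.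
have hs : s = t.
  apply: (@inL_head _ x0 t s) => //.
  - by rewrite ht; case: A {hA hk s ht hi1 hk1}.
  - by rewrite /s; case: A {hA hk s ht hi1 hk1}.
  - by rewrite /s {1}ht; case: A {hA hk s ht hi1 hk1}.
  - by rewrite /s {1}ht; apply: swap_perm.
apply: nik; rewrite hi1 hk1.
have : nth x0 s i.+1 = nth x0 t i.+1 by rewrite hs.
rewrite hi1 /s nth_cat hA ltnNge leqnSn /= subSnn => <-.
clear hi1 hs hk1 ht hk s; case: R' => [|r R'] //=.
by case: hQ => [[-> ->]|[Q' ->]].
Qed.

Lemma inL_pat {S : finType} (x0 : S) t : inL t <-> ~ pat x0 t.
Proof. split; [move=> h hp; exact: (pat_notinL hp h) | exact: nopat_inL]. Qed.

Lemma nthr {S : Type} (x0 : S) t a i : i < size t -> nth x0 (rcons t a) i = nth x0 t i.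
Proof. by rewrite nth_rcons => ->. Qed.
Lemma nthr_last {S : Type} (x0 : S) t a : nth x0 (rcons t a) (size t) = a.
Proof. by rewrite nth_rcons ltnn eqxx. Qed.

Definition Dp {S : finType} (x0 : S) t d := exists i j k, [/\ i < j, j <= k, k.+1 < size t &
  [/\ nth x0 t i = nth x0 t k, nth x0 t i.+1 <> nth x0 t k.+1 & nth x0 t j = d]].

Definition E {S : finType} (x0 : S) t a y := exists i j, [/\ i < j, j < size t &
  [/\ nth x0 t i = nth x0 t (size t).-1, nth x0 t i.+1 <> a & nth x0 t j = y]].

Lemma pat_rcons1 {S : finType} (x0 : S) t a : pat x0 t -> pat x0 (rcons t a).
Proof.
move=> [i [j [k [l [h1 h2 h3 h4 [h5 h6 h7]]]]]].
exists i, j, k, l; rewrite size_rcons !nthr; try lia.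
by split => //; lia.
Qed.

Lemma pat_rcons {S : finType} (x0 : S) t a : 0 < size t -> ~ pat x0 t ->
  (pat x0 (rcons t a) <-> Dp x0 t a \/ E x0 t a a).
Proof.
move=> t0 np; split.
  move=> [i [j [k [l [h1 h2 h3 h4 [h5 h6 h7]]]]]].
  rewrite size_rcons in h4.
  case: (ltnP l (size t)) => hl.
    exfalso; apply: np; exists i, j, k, l.
    move: h5 h6 h7; rewrite !nthr; try lia.
    by move=> *; split => //.
  have el : l = size t by lia.
  subst l; rewrite nthr_last in h6.
  case: (ltnP k.+1 (size t)) => hk.
    left; exists i, j, k; move: h5 h6 h7; rewrite !nthr; try lia.
    by move=> *; split.
  have ek : k.+1 = size t by lia.
  right; exists i, j; move: h5 h6 h7; rewrite ek nthr_last !nthr; try lia.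
  move=> *; split; try lia; split => //.
  by have -> : (size t).-1 = k by lia.
case=> [[i [j [k [h1 h2 h3 [h5 h6 h7]]]]]|[i [j [h1 h2 [h5 h6 h7]]]]].
  exists i, j, k, (size t); rewrite size_rcons nthr_last !nthr; try lia.
  by split => //; lia.
exists i, j, (size t).-1, (size t); rewrite size_rcons nthr_last.
have -> : (size t).-1.+1 = size t by lia.
rewrite nthr_last !nthr; try lia.
by split => //; lia.
Qed.

Lemma Dp_rcons {S : finType} (x0 : S) t a d : 0 < size t ->
  (Dp x0 (rcons t a) d <-> Dp x0 t d \/ E x0 t a d).
Proof.
move=> t0; split.
  move=> [i [j [k [h1 h2 h3 [h5 h6 h7]]]]].
  rewrite size_rcons in h3.
  case: (ltnP k.+1 (size t)) => hk.
    left; exists i, j, k; move: h5 h6 h7; rewrite !nthr; try lia.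
    by move=> *; split.
  have ek : k.+1 = size t by lia.
  right; exists i, j; move: h5 h6 h7; rewrite ek nthr_last !nthr; try lia.
  move=> *; split; try lia; split => //.
  by have -> : (size t).-1 = k by lia.
case=> [[i [j [k [h1 h2 h3 [h5 h6 h7]]]]]|[i [j [h1 h2 [h5 h6 h7]]]]].
  exists i, j, k; rewrite size_rcons !nthr; try lia.
  by split => //; lia.
exists i, j, (size t).-1; rewrite size_rcons.
have -> : (size t).-1.+1 = size t by lia.
rewrite nthr_last !nthr; try lia.
by split => //; lia.
Qed.

Definition LE {S : finType} (x0 : S) t x i := [/\ i.+1 < size t, nth x0 t i = x &
  forall i', i < i' -> i'.+1 < size t -> nth x0 t i' <> x].

Definition NInv {S : finType} (x0 : S) t (n : Nst S) :=
  (forall x y, n (Some x) = Some y -> exists i, LE x0 t x i /\ nth x0 t i.+1 = y) /\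
  (forall x i, i.+1 < size t -> nth x0 t i = x -> n (Some x) <> None).

Lemma LE_uniq {S : finType} (x0 : S) t x i i' : LE x0 t x i -> LE x0 t x i' -> i = i'.
Proof.
move=> [h1 h2 h3] [h1' h2' h3'].
case: (ltngtP i i') => // h; [by case: (h3 i') | by case: (h3' i)].
Qed.

Lemma LE_ge {S : finType} (x0 : S) t x i q : LE x0 t x i -> q.+1 < size t -> nth x0 t q = x -> q <= i.
Proof. move=> [h1 h2 h3] hq eq; case: (leqP q i) => // h; by case: (h3 q). Qed.

Lemma NInv_step {S : finType} (x0 : S) t (n : Nst S) a : 0 < size t -> NInv x0 t n ->
  NInv x0 (rcons t a) [ffun d => if d == Some (last x0 t) then Some a else n d].
Proof.
move=> t0 [N1 N2]; rewrite -(nth_last x0); split.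
  move=> x y; rewrite ffunE; case: eqP => [[ex] [<-]|nex].
    have e : (size t).-1.+1 = size t by lia.
    exists (size t).-1; rewrite /LE size_rcons e nthr_last nthr; last lia.
    split => //; split => //; first lia.
  move=> /N1 [i [[h1 h2 h3] h4]]; exists i; rewrite /LE size_rcons !nthr; try lia.
  split => //; split => //; first lia.
  move=> i' h5 h6; case: (ltnP i'.+1 (size t)) => h7.
    by rewrite nthr; [apply: h3 | lia].
  have -> : i' = (size t).-1 by lia.
  rewrite nthr; last lia.
  by move=> e; apply: nex; rewrite -e.
move=> x i; rewrite size_rcons ffunE => h1 h2.
case: eqP => // nex; apply: (N2 x i).
  case: (ltnP i.+1 (size t)) => // h3.
  have ei : i = (size t).-1 by lia.
  by exfalso; apply: nex; rewrite -h2 ei nthr //; lia.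
by rewrite -h2 nthr //; lia.
Qed.

Lemma loop_mono {S : finType} f (p : Pst S) (n : Nst S) b (c : Cst S) (d : S) :
  c d -> blacken_loop f p n b c d.
Proof.
elim: f b c => [|f IH] b c //= h.
have h' : blacken1 c b d by case: b => [x|] //=; rewrite ffunE h orbT.
case: (n b) => [z|] //; case: ifP => // _; exact: IH.
Qed.

Lemma loop_sub {S : finType} f (p0 : S) (n : Nst S) (x : S) (c : Cst S) (d : S) (Q : S -> Prop) :
  Q x -> (forall x z, Q x -> n (Some x) = Some z -> Q z) ->
  blacken_loop f (Some p0) n (Some x) c d -> c d \/ Q d.
Proof.
move=> + hQ; elim: f x c => [|f IH] x c //= hx; first by left.
have H1 : blacken1 c (Some x) d -> c d \/ Q d.
  rewrite /= ffunE => /orP [/eqP ->|]; by [right | left].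
case e: (n (Some x)) => [z|] //; case: ifP => // _.
move/(IH z) => [] //; last by right.
exact: (hQ x).
Qed.

Inductive reach {S : finType} (n : Nst S) (p0 : S) : S -> S -> Prop :=
| reach0 x : reach n p0 x x
| reachS x z y : n (Some x) = Some z -> z <> p0 -> reach n p0 z y -> reach n p0 x y.

Lemma reach_snoc {S : finType} (n : Nst S) p0 x y z :
  reach n p0 x y -> n (Some y) = Some z -> z <> p0 -> reach n p0 x z.
Proof.
elim=> [x' h1 h2|x' z' y' h1 h2 _ IH h3 h4]; first exact: (reachS h1 h2 (reach0 _ _ _)).
exact: (reachS h1 h2 (IH h3 h4)).
Qed.

Definition mu {S : finType} (x0 : S) t q :=
  #|[set z : S | [exists j : 'I_(size t), (q < j) && (j.+1 < size t) && (nth x0 t j == z)]]|.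

Lemma loop_self {S : finType} f (p : Pst S) (n : Nst S) x (c : Cst S) :
  blacken_loop f.+1 p n (Some x) c x.
Proof.
rewrite /=; have h : blacken1 c (Some x) x by rewrite /= ffunE eqxx.
case: (n (Some x)) => [z|] //; case: ifP => // _; exact: loop_mono.
Qed.

Lemma fuel {S : finType} (x0 : S) t n p0 : NInv x0 t n -> 0 < size t ->
  nth x0 t (size t).-1 = p0 ->
  forall x y, reach n p0 x y -> forall c f q, LE x0 t x q -> mu x0 t q < f ->
  blacken_loop f (Some p0) n (Some x) c y.
Proof.
move=> [N1 N2] t0 ep0 x y; elim=> [x' | x' z y' hz hzp hr IH] c [|f] q hq hmu //.
  exact: loop_self.
rewrite /= hz; case: eqP => [[]//|_].
have [i [hi hiz]] := N1 _ _ hz.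
have eiq := LE_uniq hi hq; subst i.
case: hq => [hq1 hq2 hq3].
have hq4 : q.+2 < size t.
  case: (ltnP q.+2 (size t)) => // h; exfalso; apply: hzp.
  by rewrite -hiz -ep0; congr nth; lia.
case ew: (n (Some z)) => [w|]; last by exfalso; apply: (N2 z q.+1 hq4 hiz).
have [q2 [hq2' _]] := N1 _ _ ew.
have qq2 : q.+1 <= q2 by apply: (LE_ge hq2').
apply: (IH _ _ q2 hq2').
have : mu x0 t q2 < mu x0 t q.
  apply: proper_card; apply/properP; split.
    apply/subsetP => w'; rewrite !inE => /existsP [j /andP [/andP [h1 h2] h3]].
    apply/existsP; exists j; rewrite h2 h3 andbT /=; lia.
  exists z.
    rewrite inE; apply/existsP; exists (Ordinal (ltnW hq4)) => /=.
    by rewrite hiz eqxx hq4 ltnSn.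
  rewrite inE; apply/negP => /existsP [j /andP [/andP [h1 h2] /eqP h3]].
  by case: hq2' => _ _ /(_ j h1 h2).
lia.
Qed.

Lemma cover {S : finType} (x0 : S) t n p0 : NInv x0 t n -> 0 < size t ->
  nth x0 t (size t).-1 = p0 ->
  forall m q, size t - q <= m -> q < size t -> reach n p0 p0 (nth x0 t q) ->
  forall r, q <= r -> r < size t -> Dp x0 t (nth x0 t r) \/ reach n p0 p0 (nth x0 t r).
Proof.
move=> [N1 N2] t0 ep0; elim=> [|m IH] q hm hq hr r h1 h2; first by exfalso; lia.
case: (eqVneq r q) => [->|rq]; first by right.
have hq1 : q.+1 < size t by lia.
case ez: (n (Some (nth x0 t q))) => [z|]; last by exfalso; apply: (N2 _ q hq1 erefl).
have [q2 [hq2 hz]] := N1 _ _ ez.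
have qq2 : q <= q2 by apply: (LE_ge hq2).
have rz : reach n p0 p0 z.
  case: (eqVneq z p0) => [->|zp]; first exact: reach0.
  by apply: (reach_snoc hr ez); apply/eqP.
case: (eqVneq (nth x0 t q.+1) z) => [e|ne].
  apply: (IH q.+1) => //; try lia; by rewrite e.
case: hq2 => [h3 h4 h5].
have qlt : q < q2.
  rewrite ltn_neqAle qq2 andbT; apply/eqP => e; subst q2.
  by rewrite hz eqxx in ne.
case: (leqP r q2) => hr2.
  left; exists q, r, q2; split => //; try lia; split => //; try by rewrite h4.
  by rewrite hz; apply/eqP.
apply: (IH q2.+1); try lia; by rewrite hz.
Qed.

Lemma E_closed {S : finType} (x0 : S) t n a : NInv x0 t n -> 0 < size t ->
  forall x z, E x0 t a x -> n (Some x) = Some z -> E x0 t a z.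
Proof.
move=> [N1 N2] t0 x z [i [j [hij hj [h1 h2 h3]]]] hz.
have [i3 [hi3 hz3]] := N1 _ _ hz.
have hi3' := hi3; case: hi3' => [l1 l2 l3].
have hii3 : i <= i3.
  case: (ltnP j.+1 (size t)) => hj2.
    have := LE_ge hi3 hj2 h3; lia.
  have ej : j = (size t).-1 by lia.
  apply: (LE_ge hi3); first lia.
  by rewrite h1 -ej.
by exists i, i3.+1; split; try lia; split.
Qed.

Lemma noE {S : finType} (x0 : S) t n a d : ~ pat x0 t -> NInv x0 t n -> 0 < size t ->
  (n (Some (nth x0 t (size t).-1)) = None \/ n (Some (nth x0 t (size t).-1)) = Some a) ->
  ~ E x0 t a d.
Proof.
move=> np [N1 N2] t0 hn [i [j [hij hj [h1 h2 h3]]]].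
have hi1 : i.+1 < size t by lia.
case: hn => hn; first by apply: (N2 _ i hi1 h1).
have [i2 [hi2 hz]] := N1 _ _ hn.
have ii2 : i <= i2 by apply: (LE_ge hi2 hi1 h1).
case: hi2 => [l1 l2 l3].
have ii2' : i < i2.
  rewrite ltn_neqAle ii2 andbT; apply/eqP => e; subst i2; by apply: h2.
apply: np; exists i, i2, i2, (size t).-1; split; try lia.
split; first by rewrite l2.
  by rewrite l2.
by rewrite hz.
Qed.

Definition Inv {S : finType} (x0 : S) t (q : state S) : Prop :=
  let: (p, n, c) := q in
  [/\ p = Some (last x0 t), NInv x0 t n, (pat x0 t -> forall d, c d) &
      (~ pat x0 t -> forall d, c d <-> Dp x0 t d)].

Lemma Inv_step {S : finType} (x0 : S) t q a : 0 < size t -> Inv x0 t q ->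
  Inv x0 (rcons t a) (delta q a).
Proof.
case: q => [[p n] c] t0 [hp hN hpat hnp]; subst p.
have ep0 := nth_last x0 t.
move: ep0; set p0 := last x0 t => ep0.
rewrite /delta.
set c1 := (if _ then _ else c).
have mono : forall d, c d -> c1 d.
  move=> d hd; rewrite /c1; case: ifP => _ //; exact: loop_mono.
have claim : ~ pat x0 t -> forall d, c1 d <-> Dp x0 t d \/ E x0 t a d.
  move=> np d; rewrite /c1.
  case: ifP => [/andP [/eqP h1 /eqP h2]|/negbT]; last first.
    rewrite negb_and !negbK => hn.
    have hn' : n (Some (nth x0 t (size t).-1)) = None \/
               n (Some (nth x0 t (size t).-1)) = Some a.
      by rewrite ep0; case/orP: hn => /eqP; [left | right].
    rewrite hnp //; split; first by left.
    by case=> // /(noE np hN t0 hn').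
  case ez: (n (Some p0)) h1 h2 => [z|] // _ hza.
  have [N1 N2] := hN.
  have [q [hq hqz]] := N1 _ _ ez.
  split.
    move/(loop_sub (Q := E x0 t a)) => [].
    - have [l1 l2 l3] := hq.
      exists q, (size t).-1; split; try lia; split.
      + by rewrite l2 ep0.
      + by rewrite hqz => e; apply: hza; rewrite e.
      + by [].
    - by move=> x z' hx hz'; apply: (E_closed hN t0 hx hz').
    - by move=> hc; left; rewrite -hnp.
    - by right.
  case=> [hd|[i [j [hij hj [h1 h2 h3]]]]].
    by apply: loop_mono; rewrite hnp.
  have := cover hN t0 ep0 (m := size t) (q := i) (leq_subr _ _) (ltn_trans hij hj).
  rewrite h1 ep0 => /(_ (reach0 _ _ _) j (ltnW hij) hj); rewrite h3 => [[hd|hr]].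
    by apply: loop_mono; rewrite hnp.
  eapply fuel; [exact: hN|exact: t0|exact: ep0|exact: hr|exact: hq|].
  have := max_card [set z : S | [exists j0 : 'I_(size t), (q < j0) && (j0.+1 < size t) && (nth x0 t j0 == z)]].
  rewrite /mu; lia.
have hNI := NInv_step a t0 hN.
have hl : Some a = Some (last x0 (rcons t a)) by rewrite last_rcons.
case: (classic (pat x0 t)) => hpt.
  have ca : c1 a := mono a (hpat hpt a).
  rewrite ca; split => //; first by move=> _ d; rewrite ffunE.
  by move=> h; exfalso; apply: h; apply: pat_rcons1.
have hc := claim hpt.
have hpr := pat_rcons a t0 hpt.
case ca: (c1 a).
  have hp' : pat x0 (rcons t a) by apply/hpr/(hc a).
  split => //; first by move=> _ d; rewrite ffunE.
split => //.
  by move=> /hpr /(hc a); rewrite ca.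
by move=> _ d; rewrite hc Dp_rcons.
Qed.

Lemma Dp_last {S : finType} (x0 : S) t : ~ pat x0 t -> 0 < size t ->
  ~ Dp x0 t (nth x0 t (size t).-1).
Proof.
move=> np t0 [i [j [k [h1 h2 h3 [h4 h5 h6]]]]]; apply: np.
by exists i, j, k, (size t).-1; split; try lia; split.
Qed.

Lemma Inv_base {S : finType} (x0 a : S) : Inv x0 [:: a] (delta (q0 S) a).
Proof.
rewrite /delta /q0 ffunE /= ffunE /=; split => //.
rewrite /delta /q0 /=; split => //.
- by move=> x y; rewrite ffunE /= ffunE.
- by move=> [i [j [k [l [h1 h2 h3 h4 _]]]]]; exfalso; move: h4 => /=; lia.
- move=> _ d; rewrite ffunE; split => // [[i [j [k [h1 h2 h3 _]]]]]; exfalso; move: h3 => /=; lia.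
Qed.

Lemma Inv_all {S : finType} (x0 : S) t : 0 < size t -> Inv x0 t (foldl (@delta S) (q0 S) t).
Proof.
elim/last_ind: t => [|t a IH] //= _.
rewrite foldl_rcons; case: t IH => [|b t] IH; first exact: Inv_base.
by apply: Inv_step => //; apply: IH.
Qed.

Theorem mainTheorem3 (S : finType) (hS : 0 < #|S|) (w : seq S) :
  accepts w <-> inL w.
Proof.
have [x0 _] : exists x0 : S, true.
  case: (pickP (fun _ : S => true)) => [x0 _|H]; first by exists x0.
  by rewrite (eq_card0 H) in hS.
rewrite (inL_pat x0) /accepts.
case: w => [|b w].
  split => [_|_]; first by move=> [i [j [k [l [h1 h2 h3 h4 _]]]]].
  by apply/existsP; exists x0; rewrite ffunE.
have := @Inv_all _ x0 (b :: w) erefl.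
case: foldl => [[p n] c] [_ _ hpat hnp]; rewrite /final.
split.
  by move=> /existsP [d hd] hp; move: (hpat hp d); rewrite (negbTE hd).
move=> np; apply/existsP; exists (nth x0 (b :: w) (size (b :: w)).-1).
apply/negP => /(hnp np); exact: Dp_last.
Qed.
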